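(* Let $N\geq3$. The trajectory $l_\infty$, i.e. the unique trajectory of system (S2) belonging to the unstable manifold of $Q_1=(0,0,0)$ and contained in the plane $\{x=0\}$ (with $z>0$), enters the region $\mathcal{R}=\{y>0,\ z>x\}$ and remains in it forever.
   Context: Let $m>1$, $\sigma>0$, $p>m$. System (S2) is $$\dot x=x(2-(m-1)y),\quad \dot y=-x-(N-2)y+z-my^2-\tfrac{p-m}{\sigma+2}xy,\quad \dot z=z(\sigma+2+(p-m)y).$$ For $N\ge3$, $Q_1=(0,0,0)$ is a saddle with two-dimensional unstable manifold tangent to the span of $(N,-1,0)$ and $(0,1,N+\sigma)$; the plane $\{x=0\}$ is invariant. *)

(* Defs.v *)
From Stdlib Require Import Reals.
From Coquelicot Require Import Coquelicot.
Open Scope R_scope.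

Definition S2_solution (m N sigma p : R) (T : Rbar) (x y z : R -> R) : Prop :=
  forall t : R, Rbar_lt t T ->
    derivable_pt_lim x t (x t * (2 - (m - 1) * y t)) /\
    derivable_pt_lim y t
      (- x t - (N - 2) * y t + z t - m * (y t)^2
       - (p - m) / (sigma + 2) * x t * y t) /\
    derivable_pt_lim z t (z t * (sigma + 2 + (p - m) * y t)).

Definition S2_maximal (m N sigma p : R) (T : Rbar) (x y z : R -> R) : Prop :=
  S2_solution m N sigma p T x y z /\
  forall (T' : Rbar) (x' y' z' : R -> R),
    S2_solution m N sigma p T' x' y' z' ->
    Rbar_le T T' ->
    (forall t : R, Rbar_lt t T -> x' t = x t /\ y' t = y t /\ z' t = z t) ->
    T' = T.

(* The trajectory lies in the unstable manifold of Q1 = (0,0,0):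
   it tends to Q1 as t -> -oo. *)
Definition tends_to_Q1_backward (x y z : R -> R) : Prop :=
  is_lim x m_infty 0 /\ is_lim y m_infty 0 /\ is_lim z m_infty 0.

(* Main.v *)
Require Import Defs.
From Stdlib Require Import Reals Lra Classical.
From Coquelicot Require Import Coquelicot.
Open Scope R_scope.

Lemma cont_of_deriv f t l : derivable_pt_lim f t l ->
  forall eps, 0 < eps -> exists del, 0 < del /\ forall u, Rabs (u - t) < del -> Rabs (f u - f t) < eps.
Proof.
  intros Hd eps He.
  assert (Hc : continuity_pt f t) by (apply derivable_continuous_pt; exact (exist _ l Hd)).
  destruct (Hc eps He) as [a [Ha H]].
  exists a; split; auto. intros u Hu.
  destruct (Req_dec u t) as [->|Hne].
  - rewrite Rminus_eq_0, Rabs_R0; lra.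
  - apply (H u). split. split; [exact I| auto]. exact Hu.
Qed.

Lemma incr f d a b : a < b -> (forall c, a <= c <= b -> derivable_pt_lim f c (d c)) ->
  (forall c, a < c < b -> 0 < d c) -> f a < f b.
Proof.
  intros Hab Hd Hpos.
  assert (pr1 : forall c, a < c < b -> derivable_pt f c).
  { intros c Hc. exists (d c). apply Hd; lra. }
  assert (pr2 : forall c, a < c < b -> derivable_pt id c).
  { intros c Hc. apply derivable_pt_id. }
  destruct (MVT f id a b pr1 pr2 Hab) as [c [P E]].
  - intros c Hc. apply derivable_continuous_pt. exists (d c). apply Hd; lra.
  - intros c Hc. apply derivable_continuous_pt, derivable_pt_id.
  - rewrite (derive_pt_eq_0 f c (d c) (pr1 c P)) in E by (apply Hd; lra).
    rewrite (derive_pt_eq_0 id c 1 (pr2 c P)) in E by apply derivable_pt_lim_id.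
    unfold id in E. specialize (Hpos c P). nra.
Qed.

Lemma fwd (f d : R -> R) (D : R -> Prop) :
  (forall t u, t <= u -> D u -> D t) ->
  (forall t, D t -> derivable_pt_lim f t (d t)) ->
  (forall t, D t -> f t = 0 -> 0 < d t) ->
  forall t1 s, D s -> t1 <= s -> 0 < f t1 -> 0 < f s.
Proof.
  intros Hdc Hd Hz t1 s Ds Hts Ht1.
  destruct (Rlt_or_le 0 (f s)) as [|Hs]; auto. exfalso.
  set (F := fun v => t1 <= - v <= s /\ f (- v) <= 0).
  assert (Hb : bound F). { exists (- t1). intros v [Hv _]. lra. }
  assert (Hne : exists v, F v). { exists (- s). unfold F. rewrite Ropp_involutive. split; [lra|auto]. }
  destruct (completeness F Hb Hne) as [L [HL1 HL2]].
  set (tau := - L).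
  assert (Hlow : forall u, t1 <= u <= s -> f u <= 0 -> tau <= u).
  { intros u Hu Hfu. assert (F (- u)) by (unfold F; rewrite Ropp_involutive; auto).
    specialize (HL1 _ H). unfold tau; lra. }
  assert (Hnear : forall e, 0 < e -> exists u, t1 <= u <= s /\ f u <= 0 /\ u < tau + e).
  { intros e He. destruct (Classical_Prop.classic (exists u, t1 <= u <= s /\ f u <= 0 /\ u < tau + e)) as [|Hn]; auto.
    exfalso. assert (is_upper_bound F (L - e)).
    { intros v [Hv Hfv]. destruct (Rle_or_lt v (L - e)) as [|Hlt]; auto.
      exfalso. apply Hn. exists (- v). unfold tau. repeat split; lra. }
    specialize (HL2 _ H). lra. }
  assert (Htau1 : t1 <= tau).
  { assert (is_upper_bound F (- t1)) by (intros v [Hv _]; lra).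
    specialize (HL2 _ H). unfold tau; lra. }
  assert (Htau2 : tau <= s) by (apply Hlow; [lra|auto]).
  assert (Dtau : D tau) by (apply (Hdc tau s); auto).
  pose proof (Hd tau Dtau) as Hdt.
  pose proof (cont_of_deriv _ _ _ Hdt) as Hc.
  assert (Hle : f tau <= 0).
  { destruct (Rle_or_lt (f tau) 0) as [|Hgt]; auto. exfalso.
    destruct (Hc (f tau) Hgt) as [del [Hdel Hc']].
    destruct (Hnear del Hdel) as [u [Hu [Hfu Hut]]].
    assert (tau <= u) by (apply Hlow; auto).
    assert (Rabs (u - tau) < del) by (rewrite Rabs_right; lra).
    specialize (Hc' u H0). apply Rabs_def2 in Hc'. lra. }
  assert (Htt : t1 < tau).
  { destruct Htau1 as [|E]; auto. subst tau. rewrite <- E in Hle. lra. }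
  assert (Hpos : forall u, t1 <= u < tau -> 0 < f u).
  { intros u Hu. destruct (Rlt_or_le 0 (f u)) as [|Hf]; auto.
    assert (tau <= u) by (apply Hlow; [lra|auto]). lra. }
  destruct Hle as [Hlt|Heq].
  - destruct (Hc (- f tau) ltac:(lra)) as [del [Hdel Hc']].
    set (u := Rmax t1 (tau - del/2)).
    assert (t1 <= u < tau) by (unfold u; unfold Rmax; destruct Rle_dec; lra).
    assert (Rabs (u - tau) < del).
    { rewrite Rabs_left by lra. unfold u, Rmax; destruct Rle_dec; lra. }
    specialize (Hc' u H0). apply Rabs_def2 in Hc'. specialize (Hpos u H). lra.
  - pose proof (Hz tau Dtau Heq) as Hdp.
    destruct (Hdt (d tau) Hdp) as [del Hdel].
    set (h := - Rmin (del / 2) ((tau - t1) / 2)).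
    assert (Hdpos := cond_pos del).
    assert (Hh : h < 0 /\ - h <= del / 2 /\ - h <= (tau - t1)/2).
    { unfold h, Rmin; destruct Rle_dec; lra. }
    assert (h <> 0) by lra.
    assert (Rabs h < del) by (rewrite Rabs_left; lra).
    specialize (Hdel h H H0). rewrite Heq, Rminus_0_r in Hdel.
    apply Rabs_def2 in Hdel.
    assert (0 < f (tau + h)) by (apply Hpos; lra).
    assert (f (tau + h) / h < 0).
    { unfold Rdiv. apply Rmult_pos_neg; [auto| apply Rinv_lt_0_compat; lra]. }
    lra.
Qed.

Theorem lemma3p2 (m sigma p : R) (N : nat) (T : Rbar) (x y z : R -> R) :
  1 < m -> 0 < sigma -> m < p -> (3 <= N)%nat ->
  S2_maximal m (INR N) sigma p T x y z ->
  tends_to_Q1_backward x y z ->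
  (forall t : R, Rbar_lt t T -> x t = 0) ->
  (forall t : R, Rbar_lt t T -> 0 < z t) ->
  exists t0 : R, Rbar_lt t0 T /\
    forall t : R, t0 <= t -> Rbar_lt t T -> 0 < y t /\ x t < z t.
Proof.
  intros Hm Hs Hp HN3 [Hsol Hmax] [_ [Hyl _]] Hx Hz.
  assert (HN : 3 <= INR N) by (apply le_INR in HN3; simpl in HN3; lra).
  set (D := fun t : R => Rbar_lt t T).
  assert (Hdc : forall t u, t <= u -> D u -> D t).
  { intros t u Htu Du. unfold D in *. destruct T; simpl in *; lra. }
  set (dy := fun t => - (INR N - 2) * y t + z t - m * (y t)^2).
  assert (Hdy : forall t, D t -> derivable_pt_lim y t (dy t)).
  { intros t Dt. destruct (Hsol t Dt) as [_ [H _]].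
    assert (E : - x t - (INR N - 2) * y t + z t - m * y t ^ 2
       - (p - m) / (sigma + 2) * x t * y t = dy t) by (unfold dy; rewrite (Hx t Dt); ring).
    rewrite E in H. exact H. }
  assert (Hb : exists b, D b).
  { destruct T as [b| |] eqn:ET.
    - exists (b - 1). unfold D; simpl; lra.
    - exists 0. unfold D; simpl; auto.
    - exfalso.
      assert (Hsol0 : S2_solution m (INR N) sigma p p_infty (fun _ => 0) (fun _ => 0) (fun _ => 0)).
      { intros t _. repeat split.
        - replace (0 * (2 - (m - 1) * 0)) with 0 by ring. apply derivable_pt_lim_const.
        - replace (- 0 - (INR N - 2) * 0 + 0 - m * 0 ^ 2 - (p - m) / (sigma + 2) * 0 * 0) with 0 by ring.
          apply derivable_pt_lim_const.
        - replace (0 * (sigma + 2 + (p - m) * 0)) with 0 by ring. apply derivable_pt_lim_const. }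
      assert (p_infty = m_infty).
      { apply (Hmax p_infty _ _ _ Hsol0). simpl; auto. intros t Ht; simpl in Ht; contradiction. }
      discriminate. }
  destruct Hb as [b Db].
  apply is_lim_spec in Hyl. simpl in Hyl.
  assert (Hk : 0 < (INR N - 2) / m) by (apply Rdiv_lt_0_compat; lra).
  destruct (Hyl (mkposreal _ Hk)) as [A HA]. simpl in HA.
  set (A' := Rmin A b).
  assert (HA' : forall t, t < A' -> D t /\ Rabs (y t) < (INR N - 2) / m).
  { intros t Ht. assert (t < A /\ t < b) by (unfold A', Rmin in Ht; destruct Rle_dec; lra).
    split. apply (Hdc t b); [lra|auto]. rewrite <- (Rminus_0_r (y t)). apply HA; lra. }
  assert (Hex : exists t1, D t1 /\ 0 < y t1).
  { apply NNPP. intro Hn.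
    assert (Hle : forall t, D t -> y t <= 0).
    { intros t Dt. destruct (Rlt_or_le 0 (y t)); auto. exfalso; apply Hn; exists t; auto. }
    assert (Hinc : forall s r, s < r -> r < A' -> y s < y r).
    { intros s r Hsr HrA. apply (incr y dy s r Hsr).
      - intros c Hc. apply Hdy. apply HA'. lra.
      - intros c Hc. destruct (HA' c ltac:(lra)) as [Dc Hc'].
        pose proof (Hle c Dc) as Hyc. pose proof (Hz c Dc) as Hzc.
        rewrite Rabs_left1 in Hc' by auto.
        assert (m * - y c < INR N - 2).
        { apply (Rmult_lt_compat_l m) in Hc'; [|lra]. field_simplify in Hc'; lra. }
        unfold dy. nra. }
    set (t0 := A' - 1). set (r := A' - 2).
    assert (Hr : y r < y t0) by (apply Hinc; unfold r, t0; lra).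
    assert (Hyt0 : y t0 <= 0) by (apply Hle, HA'; unfold t0; lra).
    assert (Hk2 : 0 < - y r) by lra.
    destruct (Hyl (mkposreal _ Hk2)) as [M HM]. simpl in HM.
    set (s := Rmin M r - 1).
    assert (Hsr : s < r) by (unfold s, Rmin; destruct Rle_dec; lra).
    assert (Hsm : s < M) by (unfold s, Rmin; destruct Rle_dec; lra).
    specialize (HM s Hsm). rewrite Rminus_0_r in HM. apply Rabs_def2 in HM.
    assert (y s < y r) by (apply Hinc; [exact Hsr | unfold r; lra]). lra. }
  destruct Hex as [t1 [Dt1 Hyt1]].
  exists t1. split; auto.
  intros t Ht Dt. split.
  - apply (fwd y dy D Hdc Hdy) with (t1 := t1); auto.
    intros u Du Hyu. unfold dy. rewrite Hyu. specialize (Hz u Du). lra.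
  - rewrite (Hx t Dt). apply Hz; auto.
Qed.
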